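(* Let $\mathcal{C}$ be a deflation-exact category and let $\mathcal{A}$ be a full subcategory of $\mathcal{C}$ satisfying axioms (A1) and (A3). Then the composition of two $\mathcal{A}^{-1}$-inflations is again an $\mathcal{A}^{-1}$-inflation.
   Context: A conflation category is an additive category with a class of kernel-cokernel pairs (closed under isomorphisms) called conflations; first map an inflation, second a deflation. A deflation-exact category is a conflation category satisfying: (R0) $1_0$ is a deflation; (R1) composites of deflations are deflations; (R2) pullbacks of deflations along arbitrary morphisms exist and are deflations. (A1): for every conflation $A'\rightarrowtail A\twoheadrightarrow A''$ in $\mathcal{C}$, $A\in\mathcal{A}$ iff $A',A''\in\mathcal{A}$. (A3): if $a\colon C\rightarrowtail D$ is an inflation and $b\colon C\twoheadrightarrow A$ a deflation with $A\in\mathcal{A}$, then the pushout of $a$ along $b$ exists and yields a deflation $D\twoheadrightarrow P$ and an inflation $A\rightarrowtail P$. An $\mathcal{A}^{-1}$-inflation is an inflation whose cokernel lies in $\mathcal{A}$. *)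

(* Defs.v *)
From HB Require Import structures.
From mathcomp Require Import all_boot all_algebra.
Set Implicit Arguments. Unset Strict Implicit. Unset Printing Implicit Defensive.
Import GRing.Theory.
Local Open Scope ring_scope.

Record AddCat := {
  Ob : Type;
  Mor : Ob -> Ob -> zmodType;
  idm : forall X, Mor X X;
  mcomp : forall X Y Z, Mor Y Z -> Mor X Y -> Mor X Z;
  compA : forall W X Y Z (h : Mor Y Z) (g : Mor X Y) (f : Mor W X),
      mcomp h (mcomp g f) = mcomp (mcomp h g) f;
  comp1m : forall X Y (f : Mor X Y), mcomp (idm Y) f = f;
  compm1 : forall X Y (f : Mor X Y), mcomp f (idm X) = f;
  compDl : forall X Y Z (g1 g2 : Mor Y Z) (f : Mor X Y),
      mcomp (g1 + g2) f = mcomp g1 f + mcomp g2 f;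
  compDr : forall X Y Z (g : Mor Y Z) (f1 f2 : Mor X Y),
      mcomp g (f1 + f2) = mcomp g f1 + mcomp g f2;
  zero_ob : Ob;
  zero_ob_id : idm zero_ob = 0;
  biprod_ex : forall X Y, exists S (i1 : Mor X S) (i2 : Mor Y S)
      (p1 : Mor S X) (p2 : Mor S Y),
      [/\ mcomp p1 i1 = idm X, mcomp p2 i2 = idm Y, mcomp p1 i2 = 0,
          mcomp p2 i1 = 0 & mcomp i1 p1 + mcomp i2 p2 = idm S]
}.

Arguments Mor : clear implicits.
Arguments idm {_} X.
Arguments mcomp {_ X Y Z} g f.

Section Notions.
Variable C : AddCat.

Definition is_iso (X Y : Ob C) (f : Mor C X Y) : Prop :=
  exists g : Mor C Y X, mcomp g f = idm X /\ mcomp f g = idm Y.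

Definition is_kernel (X Y Z : Ob C) (f : Mor C X Y) (g : Mor C Y Z) : Prop :=
  mcomp g f = 0 /\
  forall W (h : Mor C W Y), mcomp g h = 0 -> exists! u : Mor C W X, mcomp f u = h.

Definition is_cokernel (X Y Z : Ob C) (f : Mor C X Y) (g : Mor C Y Z) : Prop :=
  mcomp g f = 0 /\
  forall W (h : Mor C Y W), mcomp h f = 0 -> exists! u : Mor C Z W, mcomp u g = h.

Definition is_kernel_cokernel_pair (X Y Z : Ob C) (f : Mor C X Y) (g : Mor C Y Z) :=
  is_kernel f g /\ is_cokernel f g.

(** Pullback square   P --p'--> C'
                      |t'       |t
                      B  --p--> C0 *)
Definition is_pullback (B C0 C' P : Ob C) (p : Mor C B C0) (t : Mor C C' C0)
    (p' : Mor C P C') (t' : Mor C P B) : Prop :=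
  mcomp p t' = mcomp t p' /\
  forall W (u : Mor C W C') (v : Mor C W B), mcomp t u = mcomp p v ->
    exists! h : Mor C W P, mcomp p' h = u /\ mcomp t' h = v.

(** Pushout square    C0 --a--> D
                      |b        |b'
                      A0 --a'-> P   *)
Definition is_pushout (C0 D A0 P : Ob C) (a : Mor C C0 D) (b : Mor C C0 A0)
    (b' : Mor C D P) (a' : Mor C A0 P) : Prop :=
  mcomp b' a = mcomp a' b /\
  forall W (u : Mor C D W) (v : Mor C A0 W), mcomp u a = mcomp v b ->
    exists! h : Mor C P W, mcomp h b' = u /\ mcomp h a' = v.
End Notions.

Record ConflCat := {
  ccat :> AddCat;
  confl : forall X Y Z : Ob ccat, Mor ccat X Y -> Mor ccat Y Z -> Prop;
  confl_kc : forall X Y Z (f : Mor ccat X Y) (g : Mor ccat Y Z),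
      confl f g -> is_kernel_cokernel_pair f g;
  confl_iso : forall X Y Z X' Y' Z' (f : Mor ccat X Y) (g : Mor ccat Y Z)
      (f' : Mor ccat X' Y') (g' : Mor ccat Y' Z')
      (a : Mor ccat X X') (b : Mor ccat Y Y') (c : Mor ccat Z Z'),
      is_iso a -> is_iso b -> is_iso c ->
      mcomp b f = mcomp f' a -> mcomp c g = mcomp g' b ->
      confl f g -> confl f' g'
}.

Arguments confl {_ X Y Z} f g.

Section Conflations.
Variable C : ConflCat.

Definition inflation (X Y : Ob C) (f : Mor C X Y) : Prop :=
  exists Z (g : Mor C Y Z), confl f g.

Definition deflation (Y Z : Ob C) (g : Mor C Y Z) : Prop :=
  exists X (f : Mor C X Y), confl f g.

Definition axiom_R0 : Prop := deflation (idm (zero_ob C)).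

Definition axiom_R1 : Prop :=
  forall X Y Z (f : Mor C X Y) (g : Mor C Y Z),
    deflation f -> deflation g -> deflation (mcomp g f).

Definition axiom_R2 : Prop :=
  forall (B C0 C' : Ob C) (p : Mor C B C0) (t : Mor C C' C0),
    deflation p ->
    exists P (p' : Mor C P C') (t' : Mor C P B),
      is_pullback p t p' t' /\ deflation p'.

Definition deflation_exact : Prop := [/\ axiom_R0, axiom_R1 & axiom_R2].

(** A full subcategory is given by its class of objects A. *)
Definition axiom_A1 (A : Ob C -> Prop) : Prop :=
  forall X Y Z (f : Mor C X Y) (g : Mor C Y Z),
    confl f g -> (A Y <-> A X /\ A Z).

Definition axiom_A3 (A : Ob C -> Prop) : Prop :=
  forall (C0 D A0 : Ob C) (a : Mor C C0 D) (b : Mor C C0 A0),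
    inflation a -> deflation b -> A A0 ->
    exists P (b' : Mor C D P) (a' : Mor C A0 P),
      [/\ is_pushout a b b' a', deflation b' & inflation a'].

Definition A_inv_inflation (A : Ob C -> Prop) (X Y : Ob C) (f : Mor C X Y) : Prop :=
  exists Z (g : Mor C Y Z), confl f g /\ A Z.
End Conflations.

(* Main.v *)
Require Import Defs.
From mathcomp Require Import all_boot all_algebra.
Import GRing.Theory.
Local Open Scope ring_scope.
Set Implicit Arguments. Unset Strict Implicit.

Lemma comp0m' (C : AddCat) X Y Z (f : Mor C X Y) : mcomp (0 : Mor C Y Z) f = 0.
Proof.
have H := @compDl C X Y Z 0 0 f. rewrite addr0 in H.
have : mcomp (0 : Mor C Y Z) f + mcomp 0 f - mcomp 0 f = mcomp 0 f - mcomp 0 f.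
  by rewrite -H.
by rewrite addrK subrr.
Qed.

Lemma compm0' (C : AddCat) X Y Z (g : Mor C Y Z) : mcomp g (0 : Mor C X Y) = 0.
Proof.
have H := @compDr C X Y Z g 0 0. rewrite addr0 in H.
have : mcomp g (0 : Mor C X Y) + mcomp g 0 - mcomp g 0 = mcomp g 0 - mcomp g 0.
  by rewrite -H.
by rewrite addrK subrr.
Qed.

Lemma kernel_mono (C : AddCat) X Y Z (f : Mor C X Y) (g : Mor C Y Z) :
  is_kernel f g -> forall W (x y : Mor C W X), mcomp f x = mcomp f y -> x = y.
Proof.
move=> [gf0 H] W x y e.
have : mcomp g (mcomp f x) = 0 by rewrite Defs.compA gf0 comp0m'.
move/H => [u [_ uniq]].
rewrite -(uniq x erefl). exact: uniq y (esym e).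
Qed.

Lemma cokernel_epi (C : AddCat) X Y Z (f : Mor C X Y) (g : Mor C Y Z) :
  is_cokernel f g -> forall W (x y : Mor C Z W), mcomp x g = mcomp y g -> x = y.
Proof.
move=> [gf0 H] W x y e.
have : mcomp (mcomp x g) f = 0 by rewrite -Defs.compA gf0 compm0'.
move/H => [u [_ uniq]].
rewrite -(uniq x erefl). exact: uniq y (esym e).
Qed.

Lemma iso_id (C : AddCat) X : is_iso (idm X : Mor C X X).
Proof. by exists (idm X); rewrite comp1m. Qed.

Lemma confl_ker (C : ConflCat) X X' Y Z (f : Mor C X Y) (f' : Mor C X' Y)
  (g : Mor C Y Z) : confl f g -> is_kernel f' g -> confl f' g.
Proof.
move=> cf kf'.
have [Kf _] := confl_kc cf.
have [gf0 kf] := Kf.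
have [gf'0 kf'u] := kf'.
have [v [fv _]] := kf'u _ f gf0.
have [u [fu _]] := kf _ f' gf'0.
apply: (@confl_iso C _ _ _ _ _ _ f g f' g v (idm Y) (idm Z)) => //.
- exists u; split.
  + apply: (kernel_mono Kf).
    by rewrite Defs.compA fu fv compm1.
  + apply: (kernel_mono kf').
    by rewrite Defs.compA fv fu compm1.
- exact: iso_id.
- exact: iso_id.
- by rewrite comp1m fv.
- by rewrite comp1m compm1.
Qed.

Lemma confl_coker (C : ConflCat) X Y Z Z' (f : Mor C X Y) (g : Mor C Y Z)
  (g' : Mor C Y Z') : confl f g -> is_cokernel f g' -> confl f g'.
Proof.
move=> cf kg'.
have [_ Cg] := confl_kc cf.
have [gf0 kg] := Cg.
have [g'f0 _] := kg'.
have [v [vg _]] := (proj2 kg') _ g gf0.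
have [u [ug _]] := kg _ g' g'f0.
apply: (@confl_iso C _ _ _ _ _ _ f g f g' (idm X) (idm Y) u) => //.
- exact: iso_id.
- exact: iso_id.
- exists v; split.
  + apply: (cokernel_epi Cg).
    by rewrite -Defs.compA ug vg comp1m.
  + apply: (cokernel_epi kg').
    by rewrite -Defs.compA vg ug comp1m.
- by rewrite comp1m compm1.
- by rewrite compm1 ug.
Qed.

Theorem mainTheorem9 (C : ConflCat) (A : Ob C -> Prop) :
  deflation_exact C -> axiom_A1 A -> axiom_A3 A ->
  forall (X Y Z : Ob C) (f : Mor C X Y) (g : Mor C Y Z),
    A_inv_inflation A f -> A_inv_inflation A g ->
    A_inv_inflation A (mcomp g f).
Proof.
move=> _ HA1 HA3 X Y Z f g [P [p [cfp AP]]] [Q [q [cgq AQ]]].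
have [Kf Cf] := confl_kc cfp.
have [pf0 cokf] := Cf.
have [Kg Cg] := confl_kc cgq.
have [qg0 cokg] := Cg.
have [_ kerf] := Kf.
have [_ kerg] := Kg.
have infg : inflation g by exists Q, q.
have defp : deflation p by exists X, f.
have [E [p' [g' [[po pou] [K [k ckp']] [Q' [s cgs]]]]]] := HA3 _ _ _ g p infg defp AP.
have [Kk Cp'] := confl_kc ckp'.
have [Kg' Cs] := confl_kc cgs.
have q0 : mcomp q g = mcomp (0 : Mor C P Q) p by rewrite qg0 comp0m'.
have [r [[rp' rg'] _]] := pou Q q 0 q0.
have Kgf : is_kernel (mcomp g f) p'.
  split; first by rewrite Defs.compA po -Defs.compA pf0 compm0'.
  move=> W h hp.
  have qh : mcomp q h = 0 by rewrite -rp' -Defs.compA hp compm0'.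
  have [v [gv _]] := kerg W h qh.
  have pv : mcomp p v = 0.
    apply: (kernel_mono Kg').
    by rewrite compm0' Defs.compA -po -Defs.compA gv hp.
  have [u [fu _]] := kerf W v pv.
  exists u; split; first by rewrite -Defs.compA fu gv.
  move=> u' e.
  apply: (kernel_mono Kf); apply: (kernel_mono Kg).
  by rewrite !Defs.compA e -Defs.compA fu gv.
have Cr : is_cokernel g' r.
  split; first exact: rg'.
  move=> W h hg0.
  have hz : mcomp (mcomp h p') g = 0 by rewrite -Defs.compA po Defs.compA hg0 comp0m'.
  have [u [uq _]] := cokg W (mcomp h p') hz.
  exists u; split.
    apply: (cokernel_epi Cp').
    by rewrite -Defs.compA rp' uq.
  move=> u' e.
  apply: (cokernel_epi Cg).
  by rewrite uq -rp' Defs.compA e.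
have cgfp : confl (mcomp g f) p' := confl_ker ckp' Kgf.
have cgr : confl g' r := confl_coker cgs Cr.
exists E, p'; split => //.
by apply/(HA1 _ _ _ _ _ cgr).
Qed.
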